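(* Let $0<q<1$ and $t>0$, let $n\ge 0$ be an integer, and let $u\in\mathbb{C}\setminus\{0\}$. Put $\sinh\xi_n:=\frac{q^{-nt}u-q^{nt}u^{-1}}{2}$. Then $$\left|h_n(\sinh\xi_n\,|\,q)\right|\le \frac{|u|^n}{q^{n^2t}}\,A_q\!\left(-\frac{q^{n(2t-1)}}{|u|^2}\right).$$
   Context: Notation: $(a;q)_0:=1$, $(a;q)_k:=\prod_{j=0}^{k-1}(1-aq^j)$, $(a;q)_\infty:=\prod_{j=0}^{\infty}(1-aq^j)$, and $\left[\begin{array}{c}n\\k\end{array}\right]_q:=\frac{(q;q)_n}{(q;q)_k(q;q)_{n-k}}$. Ramanujan's function is the entire function $A_q(z):=\sum_{k=0}^{\infty}\frac{q^{k^2}}{(q;q)_k}(-z)^k$. The Ismail–Masson ($q^{-1}$-Hermite) polynomial $h_n(x|q)$ is the polynomial of degree $n$ in $x$ determined by $h_n\!\left(\tfrac{v-v^{-1}}{2}\,\middle|\,q\right)=\sum_{k=0}^{n}\left[\begin{array}{c}n\\k\end{array}\right]_q q^{k(k-n)}(-1)^k v^{n-2k}$ for all $v\in\mathbb{C}\setminus\{0\}$ (i.e. $h_n(\sinh\xi|q)=\sum_{k=0}^n \left[\begin{array}{c}n\\k\end{array}\right]_q q^{k(k-n)}(-1)^ke^{(n-2k)\xi}$). In the claim, $h_n(\sinh\xi_n|q)$ means $h_n$ evaluated at $x=\frac{q^{-nt}u-q^{nt}u^{-1}}{2}$. *)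

(* Defs.v *)
From Stdlib Require Import Reals ClassicalEpsilon.
From Coquelicot Require Import Coquelicot.
Open Scope R_scope.

Fixpoint qpoch (a q : R) (k : nat) : R :=
  match k with
  | O => 1
  | S k' => qpoch a q k' * (1 - a * q ^ k')
  end.

Definition qbinom (q : R) (n k : nat) : R :=
  qpoch q q n / (qpoch q q k * qpoch q q (n - k)).

Definition ramanujanA (q z : R) : R :=
  Series (fun k => q ^ (k * k) / qpoch q q k * (- z) ^ k).

(* The right-hand side of the defining identity:
   sum_{k=0}^n [n k]_q q^{k(k-n)} (-1)^k v^{n-2k}
   (for k <= n: q^{k(k-n)} = 1/q^{k(n-k)}, v^{n-2k} = v^{n-k}/v^k). *)
Definition IMh_v (n : nat) (q : R) (v : C) : C :=
  sum_n (fun k : nat =>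
    Cmult (RtoC (qbinom q n k / q ^ (k * (n - k)) * (-1) ^ k))
          (Cdiv (pow_n v (n - k)) (pow_n v k))) n.

(* The Ismail-Masson polynomial h_n(x|q): its value at x is the above sum
   at any nonzero v with (v - v^{-1})/2 = x (such v always exists; the
   value does not depend on the choice since the sum is invariant under
   v |-> -1/v). *)
Definition IMh (n : nat) (q : R) (x : C) : C :=
  IMh_v n q (epsilon (inhabits (RtoC 1))
                     (fun v : C => v <> RtoC 0 /\ Cdiv (Cminus v (Cinv v)) (RtoC 2) = x)).

(* Main.v *)
Require Import Defs.
From Stdlib Require Import Reals Lra Lia ClassicalEpsilon.
From Coquelicot Require Import Coquelicot.
Open Scope R_scope.

Lemma Cmod_pow_n (v : C) (k : nat) : Cmod (pow_n v k) = Cmod v ^ k.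
Proof.
  induction k; simpl. apply Cmod_1.
  change (Cmod (v * pow_n v k)%C = Cmod v * Cmod v ^ k). rewrite Cmod_mult, IHk; auto.
Qed.

Lemma pow_n_nz (v : C) (k : nat) : v <> RtoC 0 -> pow_n (K:=C_Ring) v k <> RtoC 0.
Proof.
  intros Hv H. apply Cmod_gt_0 in Hv. assert (Cmod (pow_n v k) = 0) by (rewrite H; apply Cmod_0).
  rewrite Cmod_pow_n in H0. pose proof (pow_lt _ k Hv). lra.
Qed.

Lemma qpoch_pos q k : 0 < q < 1 -> 0 < qpoch q q k.
Proof.
  intros Hq; induction k; simpl. lra.
  apply Rmult_lt_0_compat; auto.
  assert (q ^ S k < 1) by (apply pow_lt_1_compat; [lra|lia]). simpl in H. lra.
Qed.

Definition g n q k := qbinom q n k / q ^ (k * (n - k)).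
Definition S n q r := sum_n (fun k => g n q k * (r ^ (n - k) / r ^ k)) n.

Lemma g_nonneg n q k : 0 < q < 1 -> 0 <= g n q k.
Proof.
  intros Hq. unfold g, qbinom. pose proof (qpoch_pos q n Hq). pose proof (qpoch_pos q k Hq).
  pose proof (qpoch_pos q (n-k) Hq). pose proof (pow_lt q (k*(n-k)) ltac:(lra)).
  apply Rlt_le. apply Rdiv_lt_0_compat; auto. apply Rdiv_lt_0_compat; auto. nra.
Qed.

Lemma L1 n q v : 0 < q < 1 -> v <> RtoC 0 -> Cmod (IMh_v n q v) <= S n q (Cmod v).
Proof.
  intros Hq Hv. unfold IMh_v, S, sum_n. rewrite Cmod_norm.
  eapply Rle_trans. apply (@norm_sum_n_m R_AbsRing C_R_NormedModule).
  apply sum_n_m_le. intros k. rewrite <- Cmod_norm.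
  rewrite Cmod_mult, Cmod_R, Cmod_div. 2: now apply pow_n_nz.
  rewrite !Cmod_pow_n. apply Rmult_le_compat_r.
  - apply Rlt_le, Rdiv_lt_0_compat; apply pow_lt; apply Cmod_gt_0; auto.
  - rewrite Rabs_mult. rewrite <- RPow_abs,  Rabs_m1, pow1, Rmult_1_r.
    apply Req_le, Rabs_pos_eq. fold (g n q k). now apply g_nonneg.
Qed.

Lemma refl_sum (n : nat) : forall (f : nat -> R), sum_f_R0 f n = sum_f_R0 (fun k => f (n - k)%nat) n.
Proof.
  induction n; intros f. simpl. reflexivity.
  rewrite decomp_sum by lia. simpl pred. rewrite (IHn (fun i => f (Datatypes.S i))).
  rewrite tech5. rewrite Nat.sub_diag.
  rewrite (sum_eq (fun k => f (Datatypes.S (n - k))) (fun k => f (Datatypes.S n - k)%nat)).   lra.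
  intros i Hi. f_equal. lia.
Qed.

Lemma g_sym n q k : (k <= n)%nat -> g n q (n - k) = g n q k.
Proof.
  intros H. unfold g, qbinom. replace (n - (n - k))%nat with k by lia.
  rewrite (Nat.mul_comm (n-k) k), (Rmult_comm (qpoch q q (n-k))). reflexivity.
Qed.

Lemma S_sym n q r : 0 < r -> S n q (/ r) = S n q r.
Proof.
  intros Hr. unfold S. rewrite !sum_n_Reals. rewrite refl_sum.
  apply sum_eq. intros i Hi. rewrite g_sym by lia. f_equal.
  replace (n - (n - i))%nat with i by lia.
  rewrite !pow_inv. field. split; apply pow_nonzero; lra.
Qed.


Lemma qpoch_mono q m k : 0 < q < 1 -> qpoch q q (m + k) <= qpoch q q m.
Proof.
  intros Hq; induction k. rewrite Nat.add_0_r; lra.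
  rewrite Nat.add_succ_r. simpl. pose proof (qpoch_pos q (m+k) Hq).
  pose proof (pow_lt q (m+k) ltac:(lra)). assert (0 < qpoch q q (m + k) * (q * q ^ (m + k))) by (apply Rmult_lt_0_compat; nra). nra.
Qed.

Lemma term_bound q A P k m : 0 < q < 1 -> 0 < A -> 0 < P ->
  g (k + m) q k * ((A / P) ^ (k + m - k) / (A / P) ^ k)
  <= A ^ (k + m) / P ^ (k + m) * (q ^ (k * k) / qpoch q q k * (P * P / q ^ (k + m) / A ^ 2) ^ k).
Proof.
  intros Hq HA HP. unfold g, qbinom. replace (k + m - k)%nat with m by lia.
  pose proof (qpoch_pos q k Hq). pose proof (qpoch_pos q m Hq).
  pose proof (qpoch_mono q m k Hq). rewrite Nat.add_comm in H1.
  assert (0 < q ^ k) by (apply pow_lt; lra). assert (0 < q ^ m) by (apply pow_lt; lra).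
  assert (0 < A ^ k) by (apply pow_lt; lra). assert (0 < A ^ m) by (apply pow_lt; lra).
  assert (0 < P ^ k) by (apply pow_lt; lra). assert (0 < P ^ m) by (apply pow_lt; lra).
  assert (0 < (q ^ k) ^ m) by (apply pow_lt; lra). assert (0 < (q ^ m) ^ k) by (apply pow_lt; lra).
  assert (0 < (q ^ k) ^ k) by (apply pow_lt; lra).
  set (E := A ^ m * P ^ k / (qpoch q q k * qpoch q q m * (q ^ m) ^ k * P ^ m * A ^ k)).
  assert (HE : 0 <= E). { unfold E. apply Rlt_le, Rdiv_lt_0_compat. nra.
    repeat apply Rmult_lt_0_compat; auto. }
  replace (qpoch q q (k + m) / (qpoch q q k * qpoch q q m) / q ^ (k * m) *
      ((A / P) ^ m / (A / P) ^ k)) with (qpoch q q (k + m) * E).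
  2:{ rewrite (Nat.mul_comm k m), pow_mult.
      unfold E, Rdiv. rewrite !Rpow_mult_distr, !pow_inv. field. repeat split; lra. }
  replace (A ^ (k + m) / P ^ (k + m) * (q ^ (k * k) / qpoch q q k * (P * P / q ^ (k + m) / A ^ 2) ^ k))
    with (qpoch q q m * E).
  2:{ unfold E, Rdiv. rewrite !Rpow_mult_distr, !pow_inv, !pow_add, pow_mult, Rpow_mult_distr.
      rewrite <- (pow_mult A 2 k). replace (2 * k)%nat with (k + k)%nat by lia. rewrite pow_add.
      field. repeat split; lra. }
  apply Rmult_le_compat_r; auto.
Qed.


Definition bt q a k := q ^ (k * k) / qpoch q q k * a ^ k.

Lemma bt_pos q a k : 0 < q < 1 -> 0 < a -> 0 < bt q a k.
Proof.
  intros Hq Ha. unfold bt. pose proof (qpoch_pos q k Hq).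
  apply Rmult_lt_0_compat. apply Rdiv_lt_0_compat; auto. apply pow_lt; lra. apply pow_lt; lra.
Qed.

Lemma bt_ex q a : 0 < q < 1 -> 0 < a -> ex_series (bt q a).
Proof.
  intros Hq Ha.
  apply (ex_series_ext (fun k => Rabs (bt q a k))).
  { intros k. apply Rabs_pos_eq, Rlt_le, bt_pos; auto. }
  apply (ex_series_DAlembert _ 0). lra.
  { intros k. apply Rgt_not_eq, bt_pos; auto. }
  apply (is_lim_seq_ext (fun k => q * q ^ k * q ^ k * a / (1 - q * q ^ k))).
  { intros k. pose proof (qpoch_pos q k Hq). pose proof (pow_lt q k ltac:(lra)).
    assert (q ^ Datatypes.S k < 1) by (apply pow_lt_1_compat; [lra|lia]). simpl in H1.
    pose proof (pow_lt q (k*k) ltac:(lra)). pose proof (pow_lt a k Ha).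
    rewrite Rabs_pos_eq.
    2:{ apply Rlt_le, Rdiv_lt_0_compat; apply bt_pos; auto. }
    unfold bt. replace (Datatypes.S k * Datatypes.S k)%nat with (k * k + (1 + k + k))%nat by lia.
    rewrite !pow_add. simpl qpoch. simpl pow. field. repeat split; lra. }
  replace 0 with (q * 0 * 0 * a / (1 - q * 0)) by (field; lra).
  assert (Hg : is_lim_seq (fun k => q ^ k) 0) by (apply is_lim_seq_geom; rewrite Rabs_pos_eq; lra).
  apply is_lim_seq_div'. 2:{ apply is_lim_seq_minus'. apply is_lim_seq_const.
    apply is_lim_seq_mult'. apply is_lim_seq_const. exact Hg. }
  2: lra.
  apply is_lim_seq_mult'. 2: apply is_lim_seq_const.
  apply is_lim_seq_mult'. 2: exact Hg.
  apply is_lim_seq_mult'. apply is_lim_seq_const. exact Hg.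
Qed.

Lemma bt_sum q a n : 0 < q < 1 -> 0 < a -> sum_f_R0 (bt q a) n <= Series (bt q a).
Proof.
  intros Hq Ha. rewrite (Series_incr_n _ (Datatypes.S n)) by (lia || now apply bt_ex).
  simpl pred. cut (0 <= Series (fun k => bt q a (Datatypes.S n + k))). lra.
  replace 0 with (Series (fun k => 0 * bt q a (Datatypes.S n + k))).
  2:{ rewrite Series_scal_l. ring. }
  apply Series_le. intros k. pose proof (bt_pos q a (Datatypes.S n + k) Hq Ha). lra.
  apply (ex_series_incr_n (bt q a)). now apply bt_ex.
Qed.

Lemma term_bound' q A P n k : 0 < q < 1 -> 0 < A -> 0 < P -> (k <= n)%nat ->
  g n q k * ((A / P) ^ (n - k) / (A / P) ^ k)
  <= A ^ n / P ^ n * bt q (P * P / q ^ n / A ^ 2) k.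
Proof.
  intros Hq HA HP Hk. destruct (Nat.le_exists_sub k n Hk) as [m [Hm _]]. subst n.
  rewrite Nat.add_comm. unfold bt. apply term_bound; auto.
Qed.

Lemma Cmult_integral' (a b : C) : Cmult a b = RtoC 0 -> a = RtoC 0 \/ b = RtoC 0.
Proof.
  intros H. destruct (Ceq_dec a 0) as [Ha|Ha]. now left. right.
  replace b with (Cmult (Cinv a) (Cmult a b)) by (field; auto). rewrite H. ring.
Qed.

Lemma RtoC_nz (x : R) : x <> 0 -> RtoC x <> RtoC 0.
Proof. intros H E. apply H. apply (f_equal fst) in E. exact E. Qed.

Theorem mainTheorem1 (q t : R) (n : nat) (u : C) :
  0 < q < 1 -> 0 < t -> u <> RtoC 0 ->
  Cmod (IMh n q
          (Cdiv (Cminus (Cmult (RtoC (Rpower q (- (INR n * t)))) u)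
                        (Cdiv (RtoC (Rpower q (INR n * t))) u))
                (RtoC 2)))
  <= (Cmod u) ^ n / Rpower q (INR n * INR n * t)
     * ramanujanA q (- (Rpower q (INR n * (2 * t - 1)) / (Cmod u) ^ 2)).
Proof.
  intros Hq Ht Hu.
  assert (HP : 0 < Rpower q (INR n * t)) by (unfold Rpower; apply exp_pos).
  set (P := Rpower q (INR n * t)) in *.
  assert (HA : 0 < Cmod u) by (apply Cmod_gt_0; auto).
  set (A := Cmod u) in *.
  assert (E1 : Rpower q (INR n * INR n * t) = P ^ n).
  { unfold P. rewrite <- Rpower_pow by auto. rewrite Rpower_mult. f_equal. ring. }
  assert (E2 : Rpower q (INR n * (2 * t - 1)) = P * P / q ^ n).
  { unfold P. rewrite <- Rpower_pow by lra. unfold Rdiv. rewrite <- Rpower_Ropp, <- !Rpower_plus.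
    f_equal. ring. }
  rewrite E1, E2, Rpower_Ropp. fold P.
  set (a := P * P / q ^ n / A ^ 2).
  assert (Ha : 0 < a).
  { unfold a. pose proof (pow_lt q n ltac:(lra)). pose proof (pow_lt A 2 HA).
    apply Rdiv_lt_0_compat; auto. apply Rdiv_lt_0_compat; nra. }
  assert (ER : ramanujanA q (- a) = Series (bt q a)).
  { unfold ramanujanA. apply Series_ext. intros k. unfold bt. rewrite Ropp_involutive. auto. }
  rewrite ER.
  assert (HPC : RtoC P <> RtoC 0) by (apply RtoC_nz; lra).
  set (w := Cmult (RtoC (/ P)) u).
  assert (Hw : w <> RtoC 0).
  { unfold w. intros H. apply Cmult_integral' in H. destruct H as [H|H]; auto.
    apply (RtoC_nz (/ P)); auto. apply Rinv_neq_0_compat; lra. }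
  assert (Ex : Cdiv (Cminus w (Cdiv (RtoC P) u)) (RtoC 2)
               = Cdiv (Cminus w (Cinv w)) (RtoC 2)).
  { unfold w. f_equal. f_equal. rewrite RtoC_inv by lra. field. split; auto. }
  rewrite Ex. unfold IMh.
  set (Pr := fun v : C => v <> RtoC 0 /\ Cdiv (Cminus v (Cinv v)) (RtoC 2) = Cdiv (Cminus w (Cinv w)) (RtoC 2)).
  assert (Hex : exists v, Pr v) by (exists w; split; auto).
  pose proof (epsilon_spec (inhabits (RtoC 1)) Pr Hex) as [Hv Hveq].
  set (v := epsilon (inhabits (RtoC 1)) Pr) in *.
  assert (Hmod : Cmod v = A / P \/ Cmod v = / (A / P)).
  { assert (H2 : RtoC 2 <> RtoC 0) by (apply RtoC_nz; lra).
    assert (Hd : Cminus v (Cinv v) = Cminus w (Cinv w)).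
    { replace (Cminus v (Cinv v)) with (Cmult (Cdiv (Cminus v (Cinv v)) (RtoC 2)) (RtoC 2)) by (field; auto).
      rewrite Hveq. field. auto. }
    assert (Hz : Cmult (Cminus v w) (Cplus (Cmult v w) 1) = RtoC 0).
    { assert (E: Cmult (Cminus v w) (Cplus (Cmult v w) 1) =
                 Cmult (Cmult v w) (Cminus (Cminus v (Cinv v)) (Cminus w (Cinv w)))).
      field; auto. rewrite E, Hd. ring. }
    assert (Hwm : Cmod w = A / P).
    { unfold w. rewrite Cmod_mult, Cmod_R, Rabs_pos_eq. unfold A. field. lra.
      apply Rlt_le, Rinv_0_lt_compat; auto. }
    apply Cmult_integral' in Hz. destruct Hz as [Hz|Hz].
    - left. replace v with w. auto. replace v with (Cplus (Cminus v w) w) by ring. rewrite Hz. ring.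
    - right. replace v with (Copp (Cinv w)). rewrite Cmod_opp, Cmod_inv, Hwm; auto.
      replace v with (Cmult (Cinv w) (Cminus (Cplus (Cmult v w) 1) 1)) by (field; auto).
      rewrite Hz. field. auto. }
  assert (HS : S n q (Cmod v) = S n q (A / P)).
  { destruct Hmod as [H|H]; rewrite H; auto. apply S_sym. apply Rdiv_lt_0_compat; auto. }
  eapply Rle_trans. apply L1; auto. rewrite HS.
  unfold S. rewrite sum_n_Reals.
  eapply Rle_trans. apply sum_Rle. intros k Hk. apply term_bound'; auto.
  rewrite (sum_eq _ (fun k => bt q a k * (A ^ n / P ^ n))). 2:{ intros. unfold a. ring. }
  rewrite <- scal_sum.
  apply Rmult_le_compat_l. apply Rlt_le, Rdiv_lt_0_compat; apply pow_lt; auto.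
  apply bt_sum; auto.
Qed.
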